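(* Let $n\ge 1$ and, for $i=1,\dots,n$, let $f_i:\mathbb{R}^{d_i}\to\mathbb{R}$, $A_i\in\mathbb{R}^{p\times d_i}$, and let $b\in\mathbb{R}^p$. Set $d=\sum_i d_i$, $\mathbf{x}=[x_1^\top,\dots,x_n^\top]^\top\in\mathbb{R}^d$, $f(\mathbf{x})=\sum_{i=1}^n f_i(x_i)$, $A=[A_1,\dots,A_n]\in\mathbb{R}^{p\times d}$. Consider the problem $\min_{\mathbf{x}\in\mathbb{R}^d} f(\mathbf{x})$ subject to $A\mathbf{x}=b$ (i.e. all local constraint sets are $\mathcal{X}_i=\mathbb{R}^{d_i}$), assumed to have at least one optimal solution. Suppose each $f_i$ is convex and differentiable on $\mathbb{R}^{d_i}$ with locally Lipschitz gradient $\nabla f_i$, and that there exists $\mathbf{x}$ with $A\mathbf{x}=b$. Fix $\alpha>0$ and consider the augmented primal-dual gradient dynamics (APGD) $$\dot{\mathbf{x}}=-\alpha\big(\nabla f(\mathbf{x})+A^\top\lambda\big)-A^\top(A\mathbf{x}-b),\qquad \dot\lambda=A\mathbf{x}-b,$$ where $\nabla f(\mathbf{x})=[\nabla f_1(x_1)^\top,\dots,\nabla f_n(x_n)^\top]^\top$. Then for every initial point $(\mathbf{x}(0),\lambda(0))\in\mathbb{R}^d\times\mathbb{R}^p$, the trajectory $(\mathbf{x}(t),\lambda(t))$ converges to a saddle point of the augmented Lagrangian $\mathcal{L}_\alpha(\mathbf{x},\lambda)=f(\mathbf{x})+\lambda^\top(A\mathbf{x}-b)+\frac{1}{2\alpha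}\|A\mathbf{x}-b\|^2$.
   Context: A saddle point of $\mathcal{L}_\alpha$ is a pair $(\mathbf{x}^*,\lambda^* )\in\mathbb{R}^d\times\mathbb{R}^p$ with $\mathcal{L}_\alpha(\mathbf{x}^*,\lambda)\le\mathcal{L}_\alpha(\mathbf{x}^*,\lambda^* )\le\mathcal{L}_\alpha(\mathbf{x},\lambda^* )$ for all $\mathbf{x}\in\mathbb{R}^d$, $\lambda\in\mathbb{R}^p$. No structural assumption on $A$ (such as full row rank) is made. *)

(* Defs.v *)
From HB Require Import structures.
From mathcomp Require Import all_boot all_order all_algebra.
From mathcomp Require Import all_classical all_reals all_analysis.
Set Implicit Arguments. Unset Strict Implicit. Unset Printing Implicit Defensive.
Import Order.TTheory GRing.Theory Num.Theory.
Import numFieldNormedType.Exports.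
Local Open Scope classical_set_scope.
Local Open Scope ring_scope.

Definition dotv (R : realType) (k : nat) (u v : 'cV[R]_k) : R :=
  \sum_(j < k) u j 0 * v j 0.

Definition convex_fun (R : realType) (k : nat) (h : 'cV[R]_k -> R) : Prop :=
  forall (x y : 'cV[R]_k) (t : R), 0 <= t -> t <= 1 ->
    h (t *: x + (1 - t) *: y) <= t * h x + (1 - t) * h y.

Definition is_gradient (R : realType) (k : nat)
    (h : 'cV[R]_k -> R) (g : 'cV[R]_k -> 'cV[R]_k) : Prop :=
  forall x : 'cV[R]_k, differentiable h x /\
    forall v : 'cV[R]_k, ('d h x : 'cV[R]_k -> R) v = dotv (g x) v.

Definition locally_lipschitz (R : realType) (k m : nat)
    (g : 'cV[R]_k -> 'cV[R]_m) : Prop :=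
  forall x : 'cV[R]_k, exists r : R, exists K : R, 0 < r /\
    forall y z : 'cV[R]_k, ball x r y -> ball x r z ->
      `|g y - g z| <= K * `|y - z|.

Unset Implicit Arguments.
Section Problem.
Variables (R : realType) (n : nat) (d : 'I_n -> nat) (p : nat).
Variables (f : forall i : 'I_n, 'cV[R]_(d i) -> R)
          (A : forall i : 'I_n, 'M[R]_(p, d i)) (b : 'cV[R]_p).

(* block vector x = [x_1; ...; x_n] *)
Definition bvec : Type := forall i : 'I_n, 'cV[R]_(d i).

Definition fsum (x : bvec) : R := \sum_(i < n) f i (x i).

Definition resid (x : bvec) : 'cV[R]_p := (\sum_(i < n) (A i *m x i)) - b.

Definition feasible (x : bvec) : Prop := resid x = 0.

Definition is_optimal (x : bvec) : Prop :=
  feasible x /\ forall y : bvec, feasible y -> fsum x <= fsum y.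

Definition aug_lagrangian (alpha : R) (x : bvec) (lam : 'cV[R]_p) : R :=
  fsum x + dotv lam (resid x) + (2 * alpha)^-1 * dotv (resid x) (resid x).

Definition is_saddle_point (alpha : R) (xs : bvec) (ls : 'cV[R]_p) : Prop :=
  (forall lam : 'cV[R]_p, aug_lagrangian alpha xs lam <= aug_lagrangian alpha xs ls)
  /\ (forall x : bvec, aug_lagrangian alpha xs ls <= aug_lagrangian alpha x ls).

(* (x, lam) : [0, +oo) -> R^d x R^p is a solution of APGD, where
   g i is the gradient of f i: differentiable for t > 0 with the APGD
   right-hand side, and right-continuous at t = 0. *)
Definition apgd_solution (g : forall i : 'I_n, 'cV[R]_(d i) -> 'cV[R]_(d i))
    (alpha : R) (x : forall i : 'I_n, R -> 'cV[R]_(d i)) (lam : R -> 'cV[R]_p)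
    : Prop :=
  let xt (t : R) : bvec := fun i => x i t in
  (forall t : R, 0 < t ->
     (forall i : 'I_n,
        is_derive t 1 (x i)
          (- alpha *: (g i (x i t) + (A i)^T *m lam t)
           - (A i)^T *m resid (xt t)))
     /\ is_derive t 1 lam (resid (xt t)))
  /\ (forall i : 'I_n, x i @ 0^'+ --> x i 0)
  /\ lam @ 0^'+ --> lam 0.

End Problem.
Arguments fsum {R n d} f x.
Arguments resid {R n d p} A b x.
Arguments feasible {R n d p} A b x.
Arguments is_optimal {R n d p} f A b x.
Arguments aug_lagrangian {R n d p} f A b alpha x lam.
Arguments is_saddle_point {R n d p} f A b alpha xs ls.
Arguments apgd_solution {R n d p} A b g alpha x lam.
Arguments bvec {R n} d.

(* Main.v *)
Require Import Defs.
From HB Require Import structures.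
From mathcomp Require Import all_boot all_order all_algebra.
From mathcomp Require Import all_classical all_reals all_analysis.
From mathcomp Require Import lra ring.
Import Order.TTheory GRing.Theory Num.Theory.
Import numFieldNormedType.Exports.
Local Open Scope classical_set_scope.
Local Open Scope ring_scope.


Section Dot.
Context {R : realType}.

Lemma dotvE {k} (u v : 'cV[R]_k) : dotv u v = (u^T *m v) 0 0.
Proof. by rewrite /dotv !mxE; apply: eq_bigr => j _; rewrite !mxE. Qed.

Lemma dotvC {k} (u v : 'cV[R]_k) : dotv u v = dotv v u.
Proof. by apply: eq_bigr => j _; rewrite mulrC. Qed.

Lemma dotvDl {k} (u w v : 'cV[R]_k) : dotv (u + w) v = dotv u v + dotv w v.
Proof. by rewrite /dotv -big_split; apply: eq_bigr => j _; rewrite !mxE mulrDl. Qed.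

Lemma dotvDr {k} (u w v : 'cV[R]_k) : dotv v (u + w) = dotv v u + dotv v w.
Proof. by rewrite dotvC dotvDl !(dotvC v). Qed.

Lemma dotvZl {k} a (u v : 'cV[R]_k) : dotv (a *: u) v = a * dotv u v.
Proof. by rewrite /dotv mulr_sumr; apply: eq_bigr => j _; rewrite !mxE mulrA. Qed.

Lemma dotvZr {k} a (u v : 'cV[R]_k) : dotv v (a *: u) = a * dotv v u.
Proof. by rewrite dotvC dotvZl dotvC. Qed.

Lemma dotvNl {k} (u v : 'cV[R]_k) : dotv (- u) v = - dotv u v.
Proof. by rewrite -scaleN1r dotvZl mulN1r. Qed.

Lemma dotvNr {k} (u v : 'cV[R]_k) : dotv v (- u) = - dotv v u.
Proof. by rewrite dotvC dotvNl dotvC. Qed.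

Lemma dotvBl {k} (u w v : 'cV[R]_k) : dotv (u - w) v = dotv u v - dotv w v.
Proof. by rewrite dotvDl dotvNl. Qed.

Lemma dotvBr {k} (u w v : 'cV[R]_k) : dotv v (u - w) = dotv v u - dotv v w.
Proof. by rewrite dotvDr dotvNr. Qed.

Lemma dotv0l {k} (v : 'cV[R]_k) : dotv 0 v = 0.
Proof. by rewrite -(scale0r (0 : 'cV[R]_k)) dotvZl mul0r. Qed.

Lemma dotv0r {k} (v : 'cV[R]_k) : dotv v 0 = 0.
Proof. by rewrite dotvC dotv0l. Qed.

Lemma dotv_suml {k} (I : finType) (F : I -> 'cV[R]_k) v :
  dotv (\sum_i F i) v = \sum_i dotv (F i) v.
Proof.
elim/big_rec2: _ => [|i y1 y2 _ <-]; first by rewrite dotv0l.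
by rewrite dotvDl.
Qed.

Lemma dotv_sumr {k} (I : finType) (F : I -> 'cV[R]_k) v :
  dotv v (\sum_i F i) = \sum_i dotv v (F i).
Proof. by rewrite dotvC dotv_suml; apply: eq_bigr => i _; rewrite dotvC. Qed.

Lemma dotv_mull {k l} (M : 'M[R]_(k, l)) (u : 'cV[R]_l) (v : 'cV[R]_k) :
  dotv (M *m u) v = dotv u (M^T *m v).
Proof. by rewrite !dotvE trmx_mul mulmxA. Qed.

Lemma dotv_mulr {k l} (M : 'M[R]_(k, l)) (u : 'cV[R]_l) (v : 'cV[R]_k) :
  dotv v (M *m u) = dotv (M^T *m v) u.
Proof. by rewrite dotvC dotv_mull dotvC. Qed.

Lemma dotv_ge0 {k} (u : 'cV[R]_k) : 0 <= dotv u u.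
Proof. by apply: sumr_ge0 => j _; rewrite -expr2 sqr_ge0. Qed.

Lemma dotv_eq0 {k} (u : 'cV[R]_k) : dotv u u = 0 -> u = 0.
Proof.
move=> /eqP; rewrite psumr_eq0 => [/allP H|j _]; last by rewrite -expr2 sqr_ge0.
apply/matrixP => i j; rewrite !mxE; have := H i (mem_index_enum _).
by rewrite -expr2 sqrf_eq0 ord1 => /eqP.
Qed.

Lemma dotv_coord_le {k} (u : 'cV[R]_k) j : u j 0 ^+ 2 <= dotv u u.
Proof.
rewrite /dotv (bigD1 j) //= -expr2 lerDl; apply: sumr_ge0 => i _.
by rewrite -expr2 sqr_ge0.
Qed.

Lemma sq_expand {k} (u v : 'cV[R]_k) a :
  dotv (u + a *: v) (u + a *: v) = dotv u u + 2 * a * dotv u v + a ^+ 2 * dotv v v.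
Proof.
rewrite dotvDl !dotvDr !dotvZl !dotvZr [dotv v u]dotvC.
ring.
Qed.

End Dot.


Section Der.
Context {R : realType}.

Lemma is_derive_coord {m k} (X : R -> 'M[R]_(m,k)) (t : R) dX :
  is_derive t 1 X dX -> forall i j, is_derive t 1 (fun s => X s i j) (dX i j).
Proof.
move=> H i j.
have dX1 : derivable X t 1 by case: H.
have dij := (derivable_mxP X t 1).1 dX1 i j.
apply: DeriveDef => //.
have := derive_mx dX1; rewrite derive_val => ->.
by rewrite mxE.
Qed.

Lemma is_derive_mx {m k} (X : R -> 'M[R]_(m,k)) (t : R) (dX : 'M[R]_(m,k)) :
  (forall i j, is_derive t 1 (fun s => X s i j) (dX i j)) -> is_derive t 1 X dX.
Proof.
move=> H.
have dX1 : derivable X t 1.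
  by apply/derivable_mxP => i j; have := H i j => -[].
apply: DeriveDef => //; rewrite derive_mx //.
by apply/matrixP => i j; rewrite mxE; have := H i j => -[].
Qed.

Lemma is_derive_dotv {k} (X Y : R -> 'cV[R]_k) (t : R) dX dY :
  is_derive t 1 X dX -> is_derive t 1 Y dY ->
  is_derive t 1 (fun s => dotv (X s) (Y s)) (dotv dX (Y t) + dotv (X t) dY).
Proof.
move=> hX hY.
have -> : (fun s => dotv (X s) (Y s)) = \sum_(j < k) (fun s => X s j 0 * Y s j 0).
  by apply: funext => s; rewrite /dotv fct_sumE.
apply: is_derive_eq.
  apply: is_derive_sum => j.
  apply: is_deriveM; exact: is_derive_coord.
rewrite /dotv -big_split /=; apply: eq_bigr => j _.
by rewrite addrC; congr (_ + _); exact: mulrC.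
Qed.

Lemma is_derive_mulmx {m k} (M : 'M[R]_(m, k)) (X : R -> 'cV[R]_k) (t : R) dX :
  is_derive t 1 X dX -> is_derive t 1 (fun s => M *m X s) (M *m dX).
Proof.
move=> hX; apply: is_derive_mx => i j.
have -> : (fun s => (M *m X s) i j) = \sum_(l < k) (fun s => M i l * X s l j).
  by apply: funext => s; rewrite mxE fct_sumE.
apply: is_derive_eq.
  apply: is_derive_sum => l.
  apply: is_deriveM; exact: is_derive_coord.
rewrite [RHS]mxE; apply: eq_bigr => l _ /=.
by rewrite scaler0 addr0.
Qed.

Lemma is_derive_grad {k} (h : 'cV[R]_k -> R) (g : 'cV[R]_k -> 'cV[R]_k)
    (X : R -> 'cV[R]_k) (t : R) dX :
  is_gradient h g -> is_derive t 1 X dX ->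
  is_derive t 1 (fun s => h (X s)) (dotv (g (X t)) dX).
Proof.
move=> hg hX.
have [dh dhg] := hg (X t).
have dXt : differentiable X t by apply/derivable1_diffP; exact: ex_derive.
have dc : differentiable (h \o X) t by apply: differentiable_comp.
apply: DeriveDef; first exact: diff_derivable.
rewrite (deriveE _ dc) diff_comp // /= -dhg; congr ('d h (X t) _).
by rewrite -deriveE // derive_val.
Qed.

End Der.
Arguments is_derive_grad {R k h g X t dX}.
Arguments is_derive_dotv {R k X Y t dX dY}.
Arguments is_derive_mulmx {R m k} M {X t dX}.


Section Conv.
Context {R : realType}.

Lemma is_derive_scalel {k} (v : 'cV[R]_k) (t : R) :
  is_derive t 1 (fun s : R => s *: v) v.
Proof.
apply: DeriveDef; first exact: diff_derivable.
by rewrite deriveE // diff_val scale1r.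
Qed.

Lemma is_derive_line {k} (v x : 'cV[R]_k) (t : R) :
  is_derive t 1 (fun s : R => s *: v + x) v.
Proof.
have -> : (fun s : R => s *: v + x) = (fun s : R => s *: v) + cst x by [].
have h1 := is_derive_scalel v t.
have h2 : is_derive t 1 (cst x) 0 := is_derive_cst x t 1.
by have := is_deriveD h1 h2; rewrite addr0.
Qed.

Lemma nonincr_from_derive (phi dphi : R -> R) (a : R) :
  (forall t, a <= t -> is_derive t 1 phi (dphi t)) ->
  (forall t, a < t -> dphi t <= 0) ->
  forall u w, a <= u -> u <= w -> phi w <= phi u.
Proof.
move=> hd hle u w au uw.
apply: (@ler0_derive1_nincry _ phi a) => //.
- move=> t; rewrite in_itv /= andbT => /ltW /hd; by case.
- move=> t; rewrite in_itv /= andbT => at_.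
  rewrite derive1E; have [_ ->] := hd t (ltW at_); exact: hle.
- apply: continuous_in_subspaceT => z; rewrite inE /= in_itv /= andbT => az.
  apply: differentiable_continuous; apply/derivable1_diffP.
  by have [] := hd z az.
Qed.

Lemma grad_ineq {k} (h : 'cV[R]_k -> R) (g : 'cV[R]_k -> 'cV[R]_k) :
  convex_fun h -> is_gradient h g ->
  forall x y, h x + dotv (g x) (y - x) <= h y.
Proof.
move=> hc hg x y.
pose phi (s : R) := h (s *: (y - x) + x).
have dphi : is_derive (0:R) 1 phi (dotv (g x) (y - x)).
  have := is_derive_grad hg (is_derive_line (y - x) x (0:R)).
  by rewrite /= scale0r add0r.
rewrite -lerBrDl.
have <- : 'D_1 phi (0:R) = dotv (g x) (y - x) by rewrite derive_val.
rewrite ['D_1 phi 0]cvg_at_rightE; last by have [] := dphi.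
apply: limr_le.
  have dfc : derivable phi 0 1 by have [] := dphi.
  rewrite -(cvg_at_rightE (fun s : R => s^-1 *: ((phi \o shift 0) _ - phi 0))) //.
  apply: cvg_trans dfc; apply: cvg_app.
  move=> A [e egt0 Ae]; exists e => // z ze zgt0; apply: Ae => //.
  exact/lt0r_neq0.
near=> s.
have s0 : 0 < s by near: s; exact: nbhs_right_gt.
have s1 : s < 1 by near: s; exact: nbhs_right_lt.
rewrite /= [_%:A]mulr1 addr0 /phi scale0r add0r.
have -> : s *: (y - x) + x = s *: y + (1 - s) *: x.
  by rewrite scalerBr scalerBl scale1r -!addrA; congr (_ + _); rewrite addrC.
have hcv := hc y x s (ltW s0) (ltW s1).
rewrite -[s^-1 *: _]/(s^-1 * _) -(ler_pM2l s0) mulrA mulrV ?unitfE ?gt_eqF // mul1r.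
lra.
Unshelve. all: by end_near. Qed.

End Conv.
Arguments grad_ineq {R k h g}.


Section KKT.
Context {R : realType} {n : nat} {d : 'I_n -> nat} {p : nat}.
Variables (f : forall i : 'I_n, 'cV[R]_(d i) -> R)
    (g : forall i : 'I_n, 'cV[R]_(d i) -> 'cV[R]_(d i))
    (A : forall i : 'I_n, 'M[R]_(p, d i)) (b : 'cV[R]_p) (alpha : R).
Hypothesis fconv : forall i, convex_fun (f i).
Hypothesis fgrad : forall i, is_gradient (f i) (g i).
Hypothesis alpha_gt0 : 0 < alpha.

Definition kkt (xs : bvec d) (ls : 'cV[R]_p) :=
  feasible A b xs /\ forall i, g i (xs i) + (A i)^T *m ls = 0.

Lemma resid_diff (x xs : bvec d) : feasible A b xs ->
  \sum_i A i *m (x i - xs i) = resid A b x.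
Proof.
rewrite /feasible /resid => hxs.
under eq_bigr do rewrite mulmxBr.
have -> : b = \sum_(i < n) A i *m xs i by apply/eqP; rewrite eq_sym -subr_eq0 hxs.
by rewrite sumrB.
Qed.

Lemma fsum_lb xs ls (y : bvec d) : kkt xs ls ->
  fsum f xs - dotv ls (resid A b y) <= fsum f y.
Proof.
move=> [hf hg].
rewrite -(resid_diff y xs hf) dotv_sumr /fsum -sumrB; apply: ler_sum => i _.
rewrite dotv_mulr.
have e : g i (xs i) = - ((A i)^T *m ls).
  by apply/eqP; rewrite -subr_eq0 opprK hg.
have := grad_ineq (fconv i) (fgrad i) (xs i) (y i).
by rewrite e dotvNl.
Qed.

Lemma grad_mono i (u v : 'cV[R]_(d i)) : 0 <= dotv (u - v) (g i u - g i v).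
Proof.
have h1 := grad_ineq (fconv i) (fgrad i) u v.
have h2 := grad_ineq (fconv i) (fgrad i) v u.
have e : v - u = - (u - v) by rewrite opprB.
rewrite e dotvNr in h1.
rewrite dotvBr dotvC [dotv _ (g i v)]dotvC; lra.
Qed.

Lemma kkt_saddle xs ls : kkt xs ls -> is_saddle_point f A b alpha xs ls.
Proof.
move=> [hf hg]; split => [lam|x].
  by rewrite /aug_lagrangian hf !dotv0r mulr0.
rewrite /aug_lagrangian hf !dotv0r mulr0 !addr0.
have h1 : fsum f xs - dotv ls (resid A b x) <= fsum f x.
  rewrite -(resid_diff x xs hf) dotv_sumr /fsum -sumrB; apply: ler_sum => i _.
  rewrite dotv_mulr.
  have e : g i (xs i) = - ((A i)^T *m ls).
    by apply/eqP; rewrite -subr_eq0 opprK hg.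
  have := grad_ineq (fconv i) (fgrad i) (xs i) (x i).
  by rewrite e dotvNl.
have h2 : 0 <= (2 * alpha)^-1 * dotv (resid A b x) (resid A b x).
  by rewrite mulr_ge0 ?dotv_ge0 // invr_ge0 mulr_ge0 // ltW.
lra.
Qed.

Lemma opt_orth (xo : bvec d) : is_optimal f A b xo ->
  forall k : bvec d, \sum_i A i *m k i = 0 -> \sum_i dotv (g i (xo i)) (k i) = 0.
Proof.
move=> [hfe hmin] k hk.
pose Phi (s : R) := \sum_i f i (s *: k i + xo i).
have hd : forall s : R, is_derive s 1 Phi (\sum_i dotv (g i (s *: k i + xo i)) (k i)).
  move=> s.
  have -> : Phi = \sum_i (fun s => f i (s *: k i + xo i)).
    by apply: funext => z; rewrite /Phi fct_sumE.
  apply: is_derive_sum => i.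
  exact: (is_derive_grad (fgrad i) (is_derive_line (k i) (xo i) s)).
have hmin' : forall s, Phi 0 <= Phi s.
  move=> s.
  have -> : Phi 0 = fsum f xo.
    by rewrite /Phi; apply: eq_bigr => i _; rewrite scale0r add0r.
  apply: hmin; rewrite /feasible /resid.
  under eq_bigr do rewrite mulmxDr -scalemxAr.
  by rewrite big_split /= -scaler_sumr hk scaler0 add0r.
have h0 : is_derive (0:R) 1 Phi 0.
  apply: (@derive1_at_min _ Phi (-1) 1 0).
  - by rewrite -subr_ge0 opprK; lra.
  - by move=> t _; have [] := hd t.
  - by rewrite in_itv /= ltrN10 ltr01.
  - by move=> t _; exact: hmin'.
have e : \sum_i dotv (g i (0 *: k i + xo i)) (k i) = 0.
  by rewrite -(@derive_val _ _ _ _ _ _ _ (hd 0)) (@derive_val _ _ _ _ _ _ _ h0).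
apply: (etrans _ e); apply: eq_bigr => i _; by rewrite scale0r add0r.
Qed.

Lemma mul_col_entry {m k l} (u : 'M[R]_(m,k)) (M : 'M[R]_(k,l)) i j :
  (u *m col j M) i 0 = (u *m M) i j.
Proof. by rewrite !mxE; apply: eq_bigr => t _; rewrite !mxE. Qed.

Lemma kkt_exists : (exists x, is_optimal f A b x) -> exists xs ls, kkt xs ls.
Proof.
case=> xo hopt; have ho := opt_orth xo hopt.
pose G i := g i (xo i).
pose P := \sum_i A i *m (A i)^T.
pose yv := \sum_i A i *m G i.
have hsub : (yv^T <= P)%MS.
  rewrite submxE; apply/eqP/matrixP => i j; rewrite [RHS]mxE.
  set C := cokermx P.
  pose c := col j C.
  have hPc : P *m c = 0 by rewrite /c colE mulmxA mulmx_coker mul0mx.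
  have hAc : forall l, (A l)^T *m c = 0.
    have hs : \sum_l dotv ((A l)^T *m c) ((A l)^T *m c) = 0.
      apply: (etrans _ (dotv0r c)); rewrite -hPc /P mulmx_suml dotv_sumr; apply: eq_bigr => l _.
      by rewrite -mulmxA [RHS]dotv_mulr.
    move=> l; apply: dotv_eq0; apply: (psumr_eq0P _ hs) => // l' _.
    exact: dotv_ge0.
  have -> : (yv^T *m C) i j = dotv yv c.
    by rewrite ord1 dotvE /c mul_col_entry.
  rewrite /yv dotv_suml big1 // => l _.
  by rewrite dotv_mull hAc dotv0r.
have [D hD] := submxP hsub.
pose mu := D^T.
have hPmu : P *m mu = yv.
  have hPT : P^T = P.
    by rewrite /P raddf_sum; apply: eq_bigr => l _ /=; rewrite trmx_mul trmxK.
  by rewrite -[yv]trmxK hD trmx_mul hPT.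
pose kk i := G i - (A i)^T *m mu.
have hkk : \sum_i A i *m kk i = 0.
  under eq_bigr do rewrite /kk mulmxBr mulmxA.
  by rewrite sumrB -mulmx_suml -/P hPmu subrr.
have h1 := ho kk hkk.
have h2 : \sum_i dotv ((A i)^T *m mu) (kk i) = 0.
  under eq_bigr do rewrite dotv_mull trmxK.
  by rewrite -dotv_sumr hkk dotv0r.
have h3 : \sum_i dotv (kk i) (kk i) = 0.
  under eq_bigr do rewrite {1}/kk dotvBl.
  by rewrite sumrB h1 h2 subrr.
exists xo, (- mu); split; first by case: hopt.
move=> i.
have := psumr_eq0P (fun j _ => dotv_ge0 (kk j)) h3 (i:=i) isT.
move=> /dotv_eq0 /eqP; rewrite subr_eq0 => /eqP e.
by rewrite mulmxN -/(G i) e subrr.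
Qed.

End KKT.


Section Alg.
Context {R : realType} {n : nat} {d : 'I_n -> nat} {p : nat}.
Variables (f : forall i : 'I_n, 'cV[R]_(d i) -> R)
    (g : forall i : 'I_n, 'cV[R]_(d i) -> 'cV[R]_(d i))
    (A : forall i : 'I_n, 'M[R]_(p, d i)) (b : 'cV[R]_p) (alpha : R).
Hypothesis fconv : forall i, convex_fun (f i).
Hypothesis fgrad : forall i, is_gradient (f i) (g i).
Hypothesis alpha_gt0 : 0 < alpha.

Definition Phi (y : bvec d) (l : 'cV[R]_p) (i : 'I_n) : 'cV[R]_(d i) :=
  - alpha *: (g i (y i) + (A i)^T *m l) - (A i)^T *m resid A b y.

Definition Dis (y : bvec d) (l : 'cV[R]_p) : R :=
  alpha^-1 * \sum_i dotv (Phi y l i) (Phi y l i)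
  + dotv (resid A b y) (resid A b y).

Definition dWval (y : bvec d) (l : 'cV[R]_p) (xs : bvec d) (ls : 'cV[R]_p) : R :=
  \sum_i (dotv (Phi y l i) (y i - xs i) + dotv (y i - xs i) (Phi y l i))
  + alpha * (dotv (resid A b y) (l - ls) + dotv (l - ls) (resid A b y)).

Definition dEval (y : bvec d) (l : 'cV[R]_p) : R :=
  \sum_i dotv (g i (y i)) (Phi y l i)
  + (dotv (resid A b y) (resid A b y) + dotv l (\sum_i A i *m Phi y l i))
  + (2 * alpha)^-1 * (dotv (\sum_i A i *m Phi y l i) (resid A b y)
                     + dotv (resid A b y) (\sum_i A i *m Phi y l i)).

Lemma dW_bound y l xs ls : kkt g A b xs ls ->
  dWval y l xs ls <= - (2 * dotv (resid A b y) (resid A b y)).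
Proof.
move=> hk; have [hf hg] := hk.
set r := resid A b y.
have hr : \sum_i A i *m (y i - xs i) = r by exact: resid_diff.
have e1 : forall i, dotv (y i - xs i) (Phi y l i) =
    - alpha * dotv (y i - xs i) (g i (y i) - g i (xs i))
    - alpha * dotv (A i *m (y i - xs i)) (l - ls)
    - dotv (A i *m (y i - xs i)) r.
  move=> i.
  have e : g i (y i) + (A i)^T *m l = (g i (y i) - g i (xs i)) + (A i)^T *m (l - ls).
    have e0 : g i (xs i) = - ((A i)^T *m ls).
      by apply/eqP; rewrite -subr_eq0 opprK hg.
    by rewrite e0 mulmxBr opprK addrACA subrr addr0.
  by rewrite /Phi e [in LHS]dotvBr [in LHS]dotvZr [in LHS]dotvDr !dotv_mull; ring.
have e2 : \sum_i dotv (y i - xs i) (Phi y l i) =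
    - alpha * \sum_i dotv (y i - xs i) (g i (y i) - g i (xs i))
    - alpha * dotv r (l - ls) - dotv r r.
  under eq_bigr do rewrite e1.
  by rewrite !sumrB -!mulr_sumr -!dotv_suml hr.
have hM : 0 <= alpha * \sum_i dotv (y i - xs i) (g i (y i) - g i (xs i)).
  by apply: mulr_ge0; [exact: ltW | apply: sumr_ge0 => i _; exact: grad_mono].
rewrite /dWval big_split /=.
under eq_bigr do rewrite dotvC.
rewrite e2 [dotv (l - ls) r]dotvC -/r.
lra.
Qed.

Lemma dE_eq y l : dEval y l =
  - (alpha^-1 * \sum_i dotv (Phi y l i) (Phi y l i))
  + dotv (resid A b y) (resid A b y).
Proof.
set r := resid A b y.
set r' := \sum_i A i *m Phi y l i.
have e1 : dotv l r' = \sum_i dotv ((A i)^T *m l) (Phi y l i).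
  by rewrite dotv_sumr; apply: eq_bigr => i _; rewrite dotv_mulr.
have e3 : dotv r r' = \sum_i dotv ((A i)^T *m r) (Phi y l i).
  by rewrite dotv_sumr; apply: eq_bigr => i _; rewrite dotv_mulr.
have key : forall i, dotv (Phi y l i) (Phi y l i) =
    - alpha * (dotv (g i (y i)) (Phi y l i) + dotv ((A i)^T *m l) (Phi y l i))
    - dotv ((A i)^T *m r) (Phi y l i).
  move=> i; rewrite {1}/Phi dotvBl dotvZl dotvDl //.
rewrite /dEval -/r -/r'.
under [X in _ = - (_ * X) + _]eq_bigr do rewrite key.
rewrite sumrB -mulr_sumr big_split /= e1 [dotv r' r]dotvC e3.
field; exact: lt0r_neq0.
Qed.

Definition Wval (y : bvec d) (l : 'cV[R]_p) (xs : bvec d) (ls : 'cV[R]_p) : R :=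
  \sum_i dotv (y i - xs i) (y i - xs i) + alpha * dotv (l - ls) (l - ls).

Lemma Wval_ge0 y l xs ls : 0 <= Wval y l xs ls.
Proof.
apply: addr_ge0; first by apply: sumr_ge0 => i _; exact: dotv_ge0.
by apply: mulr_ge0; [exact: ltW | exact: dotv_ge0].
Qed.

Lemma U_lb y l xs ls : kkt g A b xs ls ->
  fsum f xs <= aug_lagrangian f A b alpha y l + Wval y l xs ls.
Proof.
move=> hk.
have h1 : fsum f xs - dotv ls (resid A b y) <= fsum f y by exact: fsum_lb.
set r := resid A b y in h1 *.
set D := l - ls.
have hl : l = ls + D by rewrite /D addrC subrK.
have hq0 := dotv_ge0 (r + alpha *: D).
rewrite sq_expand in hq0.
have hinv : 0 < (2 * alpha)^-1 by rewrite invr_gt0 mulr_gt0.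
have hq := mulr_ge0 (ltW hinv) hq0.
have he : 0 <= alpha * dotv D D by apply: mulr_ge0; [exact: ltW | exact: dotv_ge0].
have hS : 0 <= \sum_i dotv (y i - xs i) (y i - xs i).
  by apply: sumr_ge0 => i _; exact: dotv_ge0.
have id : (2 * alpha)^-1 * (dotv r r + 2 * alpha * dotv r D + alpha ^+ 2 * dotv D D)
   = (2 * alpha)^-1 * dotv r r + dotv r D + alpha * dotv D D / 2.
  by field; exact: lt0r_neq0.
rewrite id in hq.
rewrite /aug_lagrangian /Wval -/r -/D hl dotvDl [dotv D r]dotvC.
lra.
Qed.

End Alg.


Section Traj.
Context {R : realType} {n : nat} {d : 'I_n -> nat} {p : nat}.
Variables (f : forall i : 'I_n, 'cV[R]_(d i) -> R)
    (g : forall i : 'I_n, 'cV[R]_(d i) -> 'cV[R]_(d i))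
    (A : forall i : 'I_n, 'M[R]_(p, d i)) (b : 'cV[R]_p) (alpha : R).
Hypothesis fconv : forall i, convex_fun (f i).
Hypothesis fgrad : forall i, is_gradient (f i) (g i).
Hypothesis alpha_gt0 : 0 < alpha.
Variables (x : forall i : 'I_n, R -> 'cV[R]_(d i)) (lam : R -> 'cV[R]_p).
Hypothesis hsol : apgd_solution A b g alpha x lam.

Definition xt (t : R) : bvec d := fun i => x i t.

Lemma hder (t : R) : 0 < t ->
  (forall i, is_derive t 1 (x i) (Phi g A b alpha (xt t) (lam t) i)) /\
  is_derive t 1 lam (resid A b (xt t)).
Proof. by move=> t0; case: hsol => h _; exact: h. Qed.

Lemma der_resid (t : R) : 0 < t ->
  is_derive t 1 (fun s => resid A b (xt s))
    (\sum_i A i *m Phi g A b alpha (xt t) (lam t) i).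
Proof.
move=> t0; have [hx _] := hder t t0.
have -> : (fun s => resid A b (xt s)) = (\sum_i (fun s => A i *m x i s)) - cst b.
  by apply: funext => s; rewrite /resid /xt /= fct_sumE.
have h1 : is_derive t 1 (\sum_i (fun s => A i *m x i s))
    (\sum_i A i *m Phi g A b alpha (xt t) (lam t) i).
  by apply: is_derive_sum => i; exact: is_derive_mulmx.
have h2 : is_derive t 1 (cst b) 0 := is_derive_cst b t 1.
by have := is_deriveB h1 h2; rewrite subr0.
Qed.

Lemma is_derive_subc {k} {X : R -> 'cV[R]_k} (c : 'cV[R]_k) {t : R} {dX} :
  is_derive t 1 X dX -> is_derive t 1 (fun s => X s - c) dX.
Proof.
move=> h; have -> : (fun s => X s - c) = X - cst c by [].
have h2 : is_derive t 1 (cst c) 0 := is_derive_cst c t 1.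
by have := is_deriveB h h2; rewrite subr0.
Qed.

Definition Wt (xs : bvec d) (ls : 'cV[R]_p) (s : R) : R :=
  Wval alpha (xt s) (lam s) xs ls.

Lemma der_W xs ls (t : R) : 0 < t ->
  is_derive t 1 (Wt xs ls) (dWval g A b alpha (xt t) (lam t) xs ls).
Proof.
move=> t0; have [hx hl] := hder t t0.
have -> : Wt xs ls = (\sum_i (fun s => dotv (x i s - xs i) (x i s - xs i)))
    + (fun s => alpha * dotv (lam s - ls) (lam s - ls)).
  by apply: funext => s; rewrite /Wt /Wval /xt /= fct_sumE.
have h1 : is_derive t 1 (\sum_i (fun s => dotv (x i s - xs i) (x i s - xs i)))
   (\sum_i (dotv (Phi g A b alpha (xt t) (lam t) i) (x i t - xs i)
           + dotv (x i t - xs i) (Phi g A b alpha (xt t) (lam t) i))).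
  apply: is_derive_sum => i.
  exact: (is_derive_dotv (is_derive_subc (xs i) (hx i)) (is_derive_subc (xs i) (hx i))).
have h2 : is_derive t 1 (fun s => dotv (lam s - ls) (lam s - ls))
   (dotv (resid A b (xt t)) (lam t - ls) + dotv (lam t - ls) (resid A b (xt t))).
  exact: (is_derive_dotv (is_derive_subc ls hl) (is_derive_subc ls hl)).
have h3 := is_deriveZ alpha h2.
exact: (is_deriveD h1 h3).
Qed.

Definition Et (s : R) : R := aug_lagrangian f A b alpha (xt s) (lam s).

Lemma der_E (t : R) : 0 < t -> is_derive t 1 Et (dEval g A b alpha (xt t) (lam t)).
Proof.
move=> t0; have [hx hl] := hder t t0.
have hr := der_resid t t0.
have h1 : is_derive t 1 (\sum_i (fun s => f i (x i s)))
   (\sum_i dotv (g i (x i t)) (Phi g A b alpha (xt t) (lam t) i)).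
  by apply: is_derive_sum => i; exact: (is_derive_grad (fgrad i) (hx i)).
have h2 := is_derive_dotv hl hr.
have h3 := is_deriveZ (2 * alpha)^-1 (is_derive_dotv hr hr).
have -> : Et = (\sum_i (fun s => f i (x i s))) + (fun s => dotv (lam s) (resid A b (xt s)))
   + (fun s => (2 * alpha)^-1 *: dotv (resid A b (xt s)) (resid A b (xt s))).
  by apply: funext => s; rewrite /Et /aug_lagrangian /fsum /xt /= fct_sumE.
exact: (is_deriveD (is_deriveD h1 h2) h3).
Qed.

Definition Ut (xs : bvec d) (ls : 'cV[R]_p) (s : R) : R := Et s + Wt xs ls s.

Lemma der_U xs ls (t : R) : 0 < t -> is_derive t 1 (Ut xs ls)
  (dEval g A b alpha (xt t) (lam t) + dWval g A b alpha (xt t) (lam t) xs ls).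
Proof. by move=> t0; exact: (is_deriveD (der_E t t0) (der_W xs ls t t0)). Qed.

Lemma dU_le xs ls (t : R) : kkt g A b xs ls ->
  dEval g A b alpha (xt t) (lam t) + dWval g A b alpha (xt t) (lam t) xs ls
  <= - Dis g A b alpha (xt t) (lam t).
Proof.
move=> hk; rewrite dE_eq; last exact: alpha_gt0.
have := dW_bound f g A b alpha fconv fgrad alpha_gt0 (xt t) (lam t) xs ls hk.
rewrite /Dis; lra.
Qed.

Lemma W_mono xs ls : kkt g A b xs ls ->
  forall u w, 0 < u -> u <= w -> Wt xs ls w <= Wt xs ls u.
Proof.
move=> hk u w u0 uw.
apply: (@nonincr_from_derive _ _ (fun t => dWval g A b alpha (xt t) (lam t) xs ls) u) => //.
- by move=> t ut; apply: der_W; exact: lt_le_trans ut.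
- move=> t ut; apply: le_trans (dW_bound f g A b alpha fconv fgrad alpha_gt0 (xt t) (lam t) xs ls hk) _.
  by rewrite oppr_le0 mulr_ge0 ?dotv_ge0.
Qed.

Lemma U_ge xs ls s : kkt g A b xs ls -> fsum f xs <= Ut xs ls s.
Proof. by move=> hk; exact: (U_lb f g A b alpha fconv fgrad alpha_gt0 (xt s) (lam s) xs ls hk). Qed.

Lemma liminf_Dis xs ls : kkt g A b xs ls ->
  forall T eps, 0 < T -> 0 < eps ->
  exists t, T <= t /\ Dis g A b alpha (xt t) (lam t) < eps.
Proof.
move=> hk T eps T0 e0.
case: (pselect (exists t, T <= t /\ Dis g A b alpha (xt t) (lam t) < eps)) => // hne.
exfalso.
have hge : forall t, T <= t -> eps <= Dis g A b alpha (xt t) (lam t).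
  move=> t Tt; rewrite leNgt; apply/negP => hlt; apply: hne; exists t; split; assumption.
pose phi (s : R) := Ut xs ls s + eps * s.
have hphi : forall u w, T <= u -> u <= w -> phi w <= phi u.
  apply: (@nonincr_from_derive _ _
    (fun t => dEval g A b alpha (xt t) (lam t) + dWval g A b alpha (xt t) (lam t) xs ls
              + eps *: 1) T).
  - move=> t Tt.
    have h1 := der_U xs ls t (lt_le_trans T0 Tt).
    have h2 : is_derive t 1 (fun s : R => eps *: s) (eps *: 1).
      exact: (is_deriveZ eps (is_derive_id t 1)).
    exact: (is_deriveD h1 h2).
  - move=> t Tt; have := dU_le xs ls t hk; have := hge t (ltW Tt).
    rewrite /GRing.scale /= mulr1; lra.
pose t1 := T + (Ut xs ls T - fsum f xs + 1) / eps.
have hUT := U_ge xs ls T hk.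
have Tt1 : T <= t1.
  by rewrite /t1 lerDl divr_ge0 // ?ltW //; lra.
have := hphi T t1 (lexx T) Tt1.
have := U_ge xs ls t1 hk.
rewrite /phi /t1 mulrDr mulrCA mulfV ?gt_eqF // mulr1.
lra.
Qed.

End Traj.


Section Cont.
Context {R : realType} {T : Type} {F : set_system T} {FF : Filter F}.

Lemma cvg_coord {m k} (h : T -> 'M[R]_(m,k)) (L : 'M[R]_(m,k)) i j :
  h z @[z --> F] --> L -> h z i j @[z --> F] --> L i j.
Proof.
move=> hL.
exact: (@continuous_cvg _ _ _ F FF h (fun M : 'M[R]_(m,k) => M i j) L
  (@coord_continuous R m k i j L) hL).
Qed.

Lemma cvg_mx {m k} (h : T -> 'M[R]_(m,k)) (L : 'M[R]_(m,k)) :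
  (forall i j, h z i j @[z --> F] --> L i j) -> h z @[z --> F] --> L.
Proof.
move=> H; apply/cvgrPdist_lt => e e0.
have : \forall z \near F, forall ij : 'I_m * 'I_k,
    `|L ij.1 ij.2 - h z ij.1 ij.2| < e.
  apply: filter_forall => -[i j].
  exact: ((cvgrPdist_lt _ _).1 (H i j) e e0).
apply: filterS => z Hz.
rewrite /Num.Def.normr /= mx_normrE.
apply: bigmax_lt => // ij _; rewrite !mxE; exact: Hz.
Qed.

Lemma cvg_mulmx {m k l} (M : 'M[R]_(m,k)) (h : T -> 'M[R]_(k,l)) (L : 'M[R]_(k,l)) :
  h z @[z --> F] --> L -> (M *m h z) @[z --> F] --> M *m L.
Proof.
move=> hL; apply: cvg_mx => i j; rewrite mxE.
under eq_cvg do rewrite mxE.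
have hc : continuous (fun x : R * R => x.1 + x.2) := add_continuous.
apply: (@cvg_big R 'I_k +%R 0 xpredT hc T F (index_enum _)
  (fun t z => M i t * h z t j) (fun t => M i t * L t j) FF) => t _.
by apply: cvgM; [exact: cvg_cst | exact: cvg_coord].
Qed.

Lemma cvg_dotv {k} (h1 h2 : T -> 'cV[R]_k) (L1 L2 : 'cV[R]_k) :
  h1 z @[z --> F] --> L1 -> h2 z @[z --> F] --> L2 ->
  dotv (h1 z) (h2 z) @[z --> F] --> dotv L1 L2.
Proof.
move=> c1 c2; rewrite /dotv.
have hc : continuous (fun x : R * R => x.1 + x.2) := add_continuous.
apply: (@cvg_big R 'I_k +%R 0 xpredT hc T F (index_enum _)
  (fun t z => h1 z t 0 * h2 z t 0) (fun t => L1 t 0 * L2 t 0) FF) => t _.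
by apply: cvgM; exact: cvg_coord.
Qed.

Lemma cvg_trmx {m k} (h : T -> 'M[R]_(m,k)) (L : 'M[R]_(m,k)) :
  h z @[z --> F] --> L -> (h z)^T @[z --> F] --> L^T.
Proof.
move=> hL; apply: cvg_mx => i j; rewrite mxE.
under eq_cvg do rewrite mxE.
exact: cvg_coord.
Qed.

Lemma cvg_sumI {V : normedModType R} {N : nat} (h : 'I_N -> T -> V) (L : 'I_N -> V) :
  (forall i, h i z @[z --> F] --> L i) ->
  (\sum_i h i z) @[z --> F] --> \sum_i L i.
Proof.
move=> H.
have hc : continuous (fun x : V * V => x.1 + x.2) := add_continuous.
exact: (@cvg_big V 'I_N +%R 0 xpredT hc T F (index_enum _) h L FF).
Qed.


End Cont.


Section T.
Import ArrowAsProduct.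
Context {R : realType} {n : nat} {d : 'I_n -> nat} {p : nat}.
Definition Sp := ((forall i : 'I_n, 'rV[R]_(d i)) * 'rV[R]_p)%type.
Definition ofS1 (z : Sp) : bvec d := fun i => (z.1 i)^T.
Definition ofS2 (z : Sp) : 'cV[R]_p := z.2^T.

Lemma cvg_ofS1 (zb : Sp) i : ofS1 z i @[z --> zb] --> ofS1 zb i.
Proof.
apply: cvg_trmx.
have h1 : (fun z : Sp => z.1) @ nbhs zb --> zb.1 by apply: cvg_fst.
have h2 := @proj_continuous _ (fun i => 'rV[R]_(d i)) i zb.1.
exact: (@continuous_cvg _ _ _ (nbhs zb) _ (fun z : Sp => z.1) (proj i) zb.1 h2 h1).
Qed.

Lemma cvg_ofS2 (zb : Sp) : ofS2 z @[z --> zb] --> ofS2 zb.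
Proof.
apply: cvg_trmx; apply: cvg_snd.
Qed.

Lemma lip_cont {k m} (h : 'cV[R]_k -> 'cV[R]_m) : locally_lipschitz h -> continuous h.
Proof.
move=> H y; have [r [K [r0 HK]]] := H y.
apply/(@cvgrPdist_lt _ _ _ (nbhs y) (nbhs_filter y)) => e e0.
have hd : 0 < e / (`|K| + 1) by rewrite divr_gt0 // ltr_wpDl.
near=> z.
have hz1 : ball y r z by near: z; exact: nbhsx_ballx.
have hz2 : ball y (e / (`|K| + 1)) z by near: z; exact: nbhsx_ballx.
have hyy : ball y r y by exact: ballxx.
have := HK y z hyy hz1.
move: hz2; rewrite mx_norm_ball /ball_ /= => hz2 hle.
apply: le_lt_trans hle _.
have hK : K * `|y - z| <= (`|K| + 1) * `|y - z|.
  by apply: ler_wpM2r => //; apply: le_trans (ler_norm K) _; rewrite lerDl.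
apply: le_lt_trans hK _.
by rewrite mulrC -ltr_pdivlMr // ltr_wpDl.
Unshelve. all: by end_near. Qed.


Lemma norm_lt_of_dotv {k} (u : 'cV[R]_k) e : 0 < e -> dotv u u < e ^+ 2 -> `|u| < e.
Proof.
move=> e0 h; rewrite /Num.Def.normr /= mx_normrE.
apply: bigmax_lt => // -[i j] _ /=; rewrite ord1.
have := dotv_coord_le u i => hc.
have h2 : u i 0 ^+ 2 < e ^+ 2 by apply: le_lt_trans hc h.
rewrite ltr_norml; apply/andP; split; nra.
Qed.

Lemma abs_le_sq1 (c : R) : `|c| <= c ^+ 2 + 1.
Proof.
have : 0 <= `|c| by [].
rewrite -[c ^+ 2](real_normK (num_real c)) => h; nra.
Qed.

End T.

Lemma cluster_seq {S : topologicalType} (C : set S) (Z : nat -> S) :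
  compact C -> (forall k, C (Z k)) ->
  exists zb, C zb /\ forall (B : set S) K, nbhs zb B -> exists k, (K <= k)%N /\ B (Z k).
Proof.
move=> cC hZ.
have FC : (Z @ \oo) C.
  by exists 0%N => // k _; exact: hZ.
have [zb [Czb clz]] := cC (Z @ \oo) _ FC.
exists zb; split => // B K hB.
have hA : (Z @ \oo) [set z | exists k, (K <= k)%N /\ z = Z k].
  by exists K => // k /= hk; exists k.
have [z [[k [hk ->]] hb]] := clz _ _ hA hB.
by exists k.
Qed.


Section Main.
Import ArrowAsProduct.
Context {R : realType} {n : nat} {d : 'I_n -> nat} {p : nat}.
Variables (f : forall i : 'I_n, 'cV[R]_(d i) -> R)
    (g : forall i : 'I_n, 'cV[R]_(d i) -> 'cV[R]_(d i))
    (A : forall i : 'I_n, 'M[R]_(p, d i)) (b : 'cV[R]_p) (alpha : R).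
Hypothesis fconv : forall i, convex_fun (f i).
Hypothesis fgrad : forall i, is_gradient (f i) (g i).
Hypothesis glip : forall i, locally_lipschitz (g i).
Hypothesis alpha_gt0 : 0 < alpha.

Let DisS (z : @Sp R n d p) : R := Dis g A b alpha (ofS1 z) (ofS2 z).

Lemma cvg_resid_S (zb : @Sp R n d p) :
  resid A b (ofS1 z) @[z --> zb] --> resid A b (ofS1 zb).
Proof.
rewrite /resid; apply: cvgB; last exact: cvg_cst.
apply: cvg_sumI => i; apply: cvg_mulmx; exact: cvg_ofS1.
Qed.

Lemma cvg_Phi_S (zb : @Sp R n d p) i :
  Phi g A b alpha (ofS1 z) (ofS2 z) i @[z --> zb] -->
  Phi g A b alpha (ofS1 zb) (ofS2 zb) i.
Proof.
rewrite /Phi; apply: cvgB; last by apply: cvg_mulmx; exact: cvg_resid_S.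
apply: cvgZ; first exact: cvg_cst.
apply: cvgD; last by apply: cvg_mulmx; exact: cvg_ofS2.
apply: (@continuous_cvg _ _ _ (nbhs zb) _ (fun z => ofS1 z i) (g i) (ofS1 zb i)).
  exact: lip_cont.
exact: cvg_ofS1.
Qed.

Lemma cvg_DisS (zb : @Sp R n d p) : DisS z @[z --> zb] --> DisS zb.
Proof.
rewrite /DisS /Dis; apply: cvgD.
  apply: cvgM; first exact: cvg_cst.
  apply: cvg_sumI => i; apply: cvg_dotv; exact: cvg_Phi_S.
apply: cvg_dotv; exact: cvg_resid_S.
Qed.

Lemma cvg_Wval_S (zb : @Sp R n d p) xs ls :
  Wval alpha (ofS1 z) (ofS2 z) xs ls @[z --> zb] --> Wval alpha (ofS1 zb) (ofS2 zb) xs ls.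
Proof.
rewrite /Wval; apply: cvgD.
  apply: cvg_sumI => i; apply: cvg_dotv; apply: cvgB; (try exact: cvg_cst); exact: cvg_ofS1.
apply: cvgM; first exact: cvg_cst.
apply: cvg_dotv; apply: cvgB; (try exact: cvg_cst); exact: cvg_ofS2.
Qed.

Variables (x : forall i : 'I_n, R -> 'cV[R]_(d i)) (lam : R -> 'cV[R]_p).
Hypothesis hsol : apgd_solution A b g alpha x lam.

Lemma Dis_ge0 (y : bvec d) (l : 'cV[R]_p) : 0 <= Dis g A b alpha y l.
Proof.
rewrite /Dis; apply: addr_ge0; last exact: dotv_ge0.
apply: mulr_ge0; first by rewrite invr_ge0 ltW.
by apply: sumr_ge0 => i _; exact: dotv_ge0.
Qed.

Lemma Wval_self (y : bvec d) (l : 'cV[R]_p) : Wval alpha y l y l = 0.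
Proof.
rewrite /Wval big1 => [|i _]; last by rewrite subrr dotv0l.
by rewrite subrr dotv0l mulr0 addr0.
Qed.

Lemma Wval_ge0' (y : bvec d) (l : 'cV[R]_p) xs ls : 0 <= Wval alpha y l xs ls.
Proof.
apply: addr_ge0; first by apply: sumr_ge0 => i _; exact: dotv_ge0.
by apply: mulr_ge0; [exact: ltW | exact: dotv_ge0].
Qed.

Lemma Wval_x_le (y : bvec d) (l : 'cV[R]_p) xs ls i :
  dotv (y i - xs i) (y i - xs i) <= Wval alpha y l xs ls.
Proof.
rewrite /Wval (bigD1 i) //= -addrA lerDl.
apply: addr_ge0; first by apply: sumr_ge0 => j _; exact: dotv_ge0.
by apply: mulr_ge0; [exact: ltW | exact: dotv_ge0].
Qed.

Lemma Wval_l_le (y : bvec d) (l : 'cV[R]_p) xs ls :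
  alpha * dotv (l - ls) (l - ls) <= Wval alpha y l xs ls.
Proof. by rewrite /Wval lerDr; apply: sumr_ge0 => j _; exact: dotv_ge0. Qed.

Lemma main_conv : (exists xo, is_optimal f A b xo) ->
  exists (xs : bvec d) (ls : 'cV[R]_p),
    is_saddle_point f A b alpha xs ls /\
    (forall i, x i t @[t --> +oo] --> xs i) /\ lam t @[t --> +oo] --> ls.
Proof.
move=> hopt.
have [xs0 [ls0 hk0]] := kkt_exists f g A b fgrad hopt.
pose W1 := Wt alpha x lam xs0 ls0 1.
pose M := W1 / alpha + W1 + 1.
have W1ge0 : 0 <= W1 by exact: Wval_ge0'.
have hWle : forall t, 1 <= t -> Wt alpha x lam xs0 ls0 t <= W1.
  by move=> t ht; exact: (W_mono f g A b alpha fconv fgrad alpha_gt0 x lam hsol xs0 ls0 hk0 1 t ltr01 ht).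
have bx : forall t, 1 <= t -> forall i j, `|x i t j 0 - xs0 i j 0| <= M.
  move=> t ht i j.
  have h1 : dotv (x i t - xs0 i) (x i t - xs0 i) <= W1.
    apply: le_trans (hWle t ht); exact: (Wval_x_le (xt x t) (lam t) xs0 ls0 i).
  have h2 := dotv_coord_le (x i t - xs0 i) j.
  rewrite !mxE in h2.
  have h3 := abs_le_sq1 (x i t j 0 - xs0 i j 0).
  have h4 : 0 <= W1 / alpha by rewrite divr_ge0 // ltW.
  rewrite /M; lra.
have bl : forall t, 1 <= t -> forall j, `|lam t j 0 - ls0 j 0| <= M.
  move=> t ht j.
  have h1 : alpha * dotv (lam t - ls0) (lam t - ls0) <= W1.
    apply: le_trans (hWle t ht); exact: (Wval_l_le (xt x t) (lam t) xs0 ls0).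
  have h1' : dotv (lam t - ls0) (lam t - ls0) <= W1 / alpha.
    by rewrite ler_pdivlMr // mulrC.
  have h2 := dotv_coord_le (lam t - ls0) j; rewrite !mxE in h2.
  have h3 := abs_le_sq1 (lam t j 0 - ls0 j 0).
  rewrite /M; lra.
pose Bx i := [set v : 'rV[R]_(d i) | forall j,
  `[xs0 i j 0 - M, xs0 i j 0 + M]%classic (v ord0 j)].
pose Cx := [set z : forall i, 'rV[R]_(d i) | forall i, Bx i (z i)].
pose Cl := [set v : 'rV[R]_p | forall j, `[ls0 j 0 - M, ls0 j 0 + M]%classic (v ord0 j)].
have cCx : compact Cx.
  apply: (@tychonoff _ (fun i => 'rV[R]_(d i)) Bx) => i.
  apply: (@rV_compact R (d i) (fun j => `[xs0 i j 0 - M, xs0 i j 0 + M]%classic)) => j.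
  exact: segment_compact.
have cCl : compact Cl.
  apply: (@rV_compact R p (fun j => `[ls0 j 0 - M, ls0 j 0 + M]%classic)) => j.
  exact: segment_compact.
have cC := compact_setX cCx cCl.
have ex : forall k : nat, exists t, k.+1%:R <= t /\
    Dis g A b alpha (xt x t) (lam t) < k.+1%:R^-1.
  move=> k.
  apply: (liminf_Dis f g A b alpha fconv fgrad alpha_gt0 x lam hsol xs0 ls0 hk0) => //.
pose sk k := projT1 (cid (ex k)).
have hsk : forall k, k.+1%:R <= sk k /\
    Dis g A b alpha (xt x (sk k)) (lam (sk k)) < k.+1%:R^-1.
  by move=> k; exact: (projT2 (cid (ex k))).
have sk1 : forall k, 1 <= sk k.
  by move=> k; apply: le_trans (hsk k).1; rewrite ler1n.
pose Z k : @Sp R n d p := (fun i => (x i (sk k))^T, (lam (sk k))^T).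
have ofZ1 : forall k, ofS1 (Z k) = xt x (sk k).
  by move=> k; apply: functional_extensionality_dep => i; rewrite /ofS1 /= trmxK.
have ofZ2 : forall k, ofS2 (Z k) = lam (sk k).
  by move=> k; rewrite /ofS2 /= trmxK.
have CZ : forall k, (Cx `*` Cl) (Z k).
  move=> k; split => [i j|j] /=.
    rewrite in_itv /= mxE -ler_distl; exact: bx.
  rewrite in_itv /= mxE -ler_distl; exact: bl.
have [zb [Czb clz]] := cluster_seq _ _ cC CZ.
pose yb := ofS1 zb. pose lb := ofS2 zb.
have hD0 : DisS zb = 0.
  apply/eqP; rewrite eq_le Dis_ge0 andbT leNgt; apply/negP => hpos.
  have hpos2 : 0 < DisS zb / 2 by rewrite divr_gt0.
  have hnb : nbhs zb [set z | DisS zb / 2 < DisS z].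
    have := cvgr_dist_lt _ _ (cvg_DisS zb) _ hpos2.
    move=> /(_ (nbhs_filter zb)) H; apply: filterS H => z /= hz.
    have := ler_norm (DisS zb - DisS z); lra.
  have [K hK] := ltr_add_invr hpos2.
  rewrite add0r in hK.
  have [k [hk hB]] := clz _ K hnb.
  move: hB; rewrite /= /DisS ofZ1 ofZ2 => hB.
  have h1 := (hsk k).2.
  have h2 : k.+1%:R^-1 <= K.+1%:R^-1 :> R.
    by rewrite lef_pV2 ?posrE ?ltr0Sn // ler_nat ltnS.
  rewrite -/(DisS zb) in hB.
  have := lt_trans (lt_le_trans (lt_trans hB h1) h2) hK; by rewrite ltxx.
have hk : kkt g A b yb lb.
  move: hD0; rewrite /DisS /Dis -/yb -/lb => hD.
  have hs0 : 0 <= \sum_i dotv (Phi g A b alpha yb lb i) (Phi g A b alpha yb lb i).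
    by apply: sumr_ge0 => i _; exact: dotv_ge0.
  have hr0 := dotv_ge0 (resid A b yb).
  have hinv : 0 < alpha^-1 by rewrite invr_gt0.
  have hsa := mulr_ge0 (ltW hinv) hs0.
  have hr : dotv (resid A b yb) (resid A b yb) = 0 by lra.
  have hs1 : alpha^-1 * \sum_i dotv (Phi g A b alpha yb lb i) (Phi g A b alpha yb lb i) = 0.
    by lra.
  have hS : \sum_i dotv (Phi g A b alpha yb lb i) (Phi g A b alpha yb lb i) = 0.
    by move/eqP: hs1; rewrite mulf_eq0 invr_eq0 gt_eqF //= => /eqP.
  have er := dotv_eq0 _ hr.
  split; first exact: er.
  move=> i.
  have ep := dotv_eq0 _ (psumr_eq0P (fun j _ => dotv_ge0 _) hS (i := i) isT).
  move: ep; rewrite /Phi er mulmx0 subr0 => /eqP.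
  by rewrite scaler_eq0 oppr_eq0 gt_eqF //= => /eqP.
have hW : forall eps, 0 < eps ->
    exists t0, 0 < t0 /\ forall t, t0 <= t -> Wt alpha x lam yb lb t < eps.
  move=> eps e0.
  have hnb : nbhs zb [set z | Wval alpha (ofS1 z) (ofS2 z) yb lb < eps].
    have := cvgr_dist_lt _ _ (cvg_Wval_S zb yb lb) _ e0.
    rewrite -/yb -/lb Wval_self.
    move=> /(_ (nbhs_filter zb)) H; apply: filterS H => z /= hz.
    by rewrite sub0r normrN in hz; apply: le_lt_trans (ler_norm _) hz.
  have [k [_ hB]] := clz _ 0%N hnb.
  move: hB; rewrite /= ofZ1 ofZ2 => hB.
  exists (sk k); split; first exact: lt_le_trans ltr01 (sk1 k).
  move=> t ht; apply: le_lt_trans _ hB.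
  exact: (W_mono f g A b alpha fconv fgrad alpha_gt0 x lam hsol yb lb hk (sk k) t
    (lt_le_trans ltr01 (sk1 k)) ht).
exists yb, lb; split.
  exact: (kkt_saddle f g A b alpha fconv fgrad alpha_gt0 yb lb hk).
split.
- move=> i; apply/cvgrPdist_lt => e e0.
  have [t0 [t00 ht0]] := hW (e ^+ 2) (exprn_gt0 2 e0).
  exists t0; split; first exact: num_real.
  move=> t ht; apply: norm_lt_of_dotv => //.
  have hWt := ht0 t (ltW ht).
  rewrite -opprB dotvNl dotvNr opprK.
  apply: le_lt_trans hWt; exact: (Wval_x_le (xt x t) (lam t) yb lb i).
- apply/cvgrPdist_lt => e e0.
  have [t0 [t00 ht0]] := hW (alpha * e ^+ 2) (mulr_gt0 alpha_gt0 (exprn_gt0 2 e0)).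
  exists t0; split; first exact: num_real.
  move=> t ht; apply: norm_lt_of_dotv => //.
  have hWt := ht0 t (ltW ht).
  rewrite -opprB dotvNl dotvNr opprK.
  have : alpha * dotv (lam t - lb) (lam t - lb) < alpha * e ^+ 2.
    apply: le_lt_trans hWt; exact: (Wval_l_le (xt x t) (lam t) yb lb).
  by rewrite ltr_pM2l.
Qed.

End Main.

Theorem proposition1 (R : realType) (n : nat) (d : 'I_n -> nat) (p : nat)
    (f : forall i : 'I_n, 'cV[R]_(d i) -> R)
    (g : forall i : 'I_n, 'cV[R]_(d i) -> 'cV[R]_(d i))
    (A : forall i : 'I_n, 'M[R]_(p, d i)) (b : 'cV[R]_p) (alpha : R) :
  (0 < n)%N ->
  (forall i : 'I_n, convex_fun (f i)) ->
  (forall i : 'I_n, is_gradient (f i) (g i)) ->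
  (forall i : 'I_n, locally_lipschitz (g i)) ->
  (exists x : bvec d, feasible A b x) ->
  (exists x : bvec d, is_optimal f A b x) ->
  0 < alpha ->
  forall (x : forall i : 'I_n, R -> 'cV[R]_(d i)) (lam : R -> 'cV[R]_p),
    apgd_solution A b g alpha x lam ->
    exists (xs : bvec d) (ls : 'cV[R]_p),
      is_saddle_point f A b alpha xs ls /\
      (forall i : 'I_n, x i t @[t --> +oo] --> xs i) /\
      lam t @[t --> +oo] --> ls.
Proof.
move=> _ hconv hgrad hlip _ hopt ha x lam hsol.
exact: (main_conv f g A b alpha hconv hgrad hlip ha x lam hsol hopt).
Qed.
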